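(* Let $k\geqslant 1$ be an integer. For $l=(l_1,\ldots,l_k)\in(\mathbb R_{>0})^k$, let $S_l$ be the nondecreasing sequence obtained by taking the union (with multiplicity) of the $k$ sequences $T_i=\{d/l_i\}_{d=1}^\infty$, $i=1,\ldots,k$, and reordering the entries in nondecreasing order; write $S_l[d]$ for the $d$-th entry of $S_l$ (indexing from $1$), and $|l|=l_1+\ldots+l_k$. Then for every $d\in\mathbb N=\{1,2,\ldots\}$, $$\sup_{l\in(\mathbb R_{>0})^k}|l|\,S_l[d]=d+k-1.$$ *)

(* Defs.v *)
From HB Require Import structures.
From mathcomp Require Import all_boot all_order all_algebra.
From mathcomp Require Import all_classical all_reals ereal.
Set Implicit Arguments. Unset Strict Implicit. Unset Printing Implicit Defensive.
Import Order.TTheory GRing.Theory Num.Theory.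
Local Open Scope ring_scope.
Local Open Scope classical_set_scope.

(* For t >= 0, the number of entries of T_i that are <= t is
   #{ m >= 1 | m / l_i <= t } = floor (t * l_i)  (l_i > 0),
   so the number of entries of S_l that are <= t is the following sum. *)
Definition nentries_le (R : realType) (k : nat) (l : 'I_k -> R) (t : R) : int :=
  \sum_(i < k) Num.floor (t * l i).

(* S_l[d] (1-indexed): the d-th entry of the nondecreasing rearrangement of
   S_l, i.e. the least t >= 0 such that at least d entries of S_l are <= t
   (standard order statistic; the infimum is attained). *)
Definition Sl (R : realType) (k : nat) (l : 'I_k -> R) (d : nat) : R :=
  inf [set t : R | 0 <= t /\ (d%:Z <= nentries_le l t)%R].

Definition lsum (R : realType) (k : nat) (l : 'I_k -> R) : R := \sum_(i < k) l i.

(* Main.v *)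
Require Import Defs.
From HB Require Import structures.
From mathcomp Require Import all_boot all_order all_algebra.
From mathcomp Require Import all_classical all_reals ereal.
From mathcomp Require Import lra zify.
Import Order.TTheory GRing.Theory Num.Theory.
Local Open Scope ring_scope.
Local Open Scope classical_set_scope.

Lemma N_gt (R : realType) (k : nat) (hk : (1 <= k)%N) (l : 'I_k -> R) (t : R) :
  t * lsum l - k%:R < (nentries_le l t)%:~R.
Proof.
rewrite /nentries_le /lsum rmorph_sum mulr_sumr /=.
have -> : (k%:R : R) = \sum_(i < k) (1 : R) by rewrite sumr_const card_ord.
rewrite -sumrB; apply: ltr_sum.
  by apply/hasP; exists (Ordinal hk); rewrite ?mem_index_enum.
by move=> i _; have := lt_succ_floor (t * l i); rewrite intrD /= => h; lra.
Qed.


Lemma upper (R : realType) (k d : nat) (hk : (1 <= k)%N) (hd : (1 <= d)%N)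
  (l : 'I_k -> R) (hl : forall i, 0 < l i) :
  lsum l * Sl l d <= (d + k - 1)%:R.
Proof.
have Lp : 0 < lsum l.
  rewrite /lsum (bigD1 (Ordinal hk)) //=.
  apply: ltr_pwDl; first exact: hl.
  by apply: sumr_ge0 => i _; apply: ltW.
rewrite leNgt; apply/negP => H.
pose t := (d + k - 1)%:R / lsum l.
have t0 : 0 <= t by rewrite divr_ge0 // ltW.
have tS : t < Sl l d by rewrite /t ltr_pdivrMr // mulrC.
have nin : ~ (d%:Z <= nentries_le l t).
  move=> Hd; move: tS; apply/negP; rewrite -leNgt /Sl.
  apply: ge_inf; last by split.
  by exists 0 => y [].
have Hlt : nentries_le l t <= d%:Z - 1.
  by rewrite -ltzD1 subrK ltNge; apply/negP.
have H1 : (nentries_le l t)%:~R <= (d%:R : R) - 1.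
  by move: Hlt; rewrite -(ler_int R) intrD /= => ->.
have H2 := @N_gt R k hk l t.
have E : t * lsum l = (d + k - 1)%:R by rewrite /t divfK // gt_eqF.
rewrite E natrB ?natrD in H2; last by rewrite addn_gt0 hd.
lra.
Qed.

Definition n0 {k : nat} (d : nat) (i : 'I_k) : int := if (val i == 0)%N then d%:Z else 1.
Lemma sum_n0 k d (hk : (0 < k)%N) : \sum_(i < k) n0 d i = (d + k - 1)%N%:Z.
Proof.
rewrite (bigD1 (Ordinal hk)) //= {1}/n0 /=.
rewrite (eq_bigr (fun _ => 1)); last first.
  by move=> i; rewrite /n0 -val_eqE /= => /negbTE ->.
rewrite sumr_const cardC1 card_ord.
rewrite natz -PoszD; congr Posz; case: k hk => // k _; by rewrite addnS subn1.
Qed.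


Lemma n0_gt0 k d (hd : (1 <= d)%N) (i : 'I_k) : 0 < n0 d i.
Proof. by rewrite /n0; case: ifP => // _; rewrite ltz_nat. Qed.

Lemma Sl_l0 (R : realType) k d (hk : (1 <= k)%N) (hd : (1 <= d)%N) :
  Sl (fun i : 'I_k => (n0 d i)%:~R : R) d = 1.
Proof.
have in1 : (0 <= (1:R)) /\ (d%:Z <= nentries_le (fun i : 'I_k => (n0 d i)%:~R : R) 1).
  split => //; rewrite /nentries_le (bigD1 (Ordinal hk)) //=.
  apply: le_trans (_ : Num.floor (1 * (n0 d (Ordinal hk))%:~R : R) <= _).
    by rewrite floor_ge_int mul1r /n0 /=.
  rewrite lerDl; apply: sumr_ge0 => i _.
  by rewrite floor_ge0 mul1r ler0z ltW // n0_gt0.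
apply/le_anti/andP; split.
  by apply: ge_inf; [exists 0 => y [] | ].
apply: lb_le_inf; first by exists 1.
move=> y [y0 Hy]; rewrite leNgt; apply/negP => y1.
move: Hy; apply/negP; rewrite -ltNge.
have Hle : nentries_le (fun i : 'I_k => (n0 d i)%:~R : R) y <= \sum_(i < k) (n0 d i - 1).
  apply: ler_sum => i _.
  rewrite -ltzD1 subrK floor_lt_int gtr_pMl // ltr0z n0_gt0 //.
apply: (le_lt_trans Hle).
rewrite sumrB sum_n0 // sumr_const card_ord -natz.
rewrite !natz; lia.
Qed.

Theorem proposition5 (R : realType) (k d : nat) (hk : (1 <= k)%N) (hd : (1 <= d)%N) :
  ereal_sup [set ((lsum l * Sl l d)%:E : \bar R) | l in
              [set l : 'I_k -> R | forall i, 0 < l i]]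
  = ((d + k - 1)%:R : R)%:E.
Proof.
apply/le_anti/andP; split.
  apply: ge_ereal_sup => _ [l hl <-]; rewrite lee_fin; exact: upper.
apply: ereal_sup_ubound.
exists (fun i : 'I_k => (n0 d i)%:~R : R).
  by move=> i /=; rewrite ltr0z n0_gt0.
rewrite Sl_l0 // mulr1 /lsum.
have -> : \sum_(i < k) ((n0 d i)%:~R : R) = (\sum_(i < k) n0 d i)%:~R by rewrite rmorph_sum.
by rewrite sum_n0.
Qed.
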